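(* Let $A\in\mathbb{C}^{m\times n}$ have rank $r$, $B\in\mathbb{C}^{m\times n}$ have rank $s$, and $E=B-A$. Then $$\|B^{\dagger}-A^{\dagger}\|_{F}^{2}\leq\min\big\{\beta_{1}+\|B^{\dagger}EA^{\dagger}\|_{F}^{2},\ \beta_{2}+\|A^{\dagger}EB^{\dagger}\|_{F}^{2}\big\},$$ where $$\beta_{1}:=\|A^{\dagger}\|_{2}^{4}\big(\|E\|_{F}^{2}-\|EB^{\dagger}B\|_{F}^{2}\big)+\|B^{\dagger}\|_{2}^{4}\big(\|E\|_{F}^{2}-\|AA^{\dagger}E\|_{F}^{2}\big),$$ $$\beta_{2}:=\|A^{\dagger}\|_{2}^{4}\big(\|E\|_{F}^{2}-\|BB^{\dagger}E\|_{F}^{2}\big)+\|B^{\dagger}\|_{2}^{4}\big(\|E\|_{F}^{2}-\|EA^{\dagger}A\|_{F}^{2}\big).$$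
   Context: $M^{\dagger}$ denotes the Moore–Penrose inverse of $M$, $\|\cdot\|_{2}$ the spectral norm and $\|\cdot\|_{F}$ the Frobenius norm. *)

(* Defs.v *)
From HB Require Import structures.
From mathcomp Require Import all_boot all_order all_algebra.
From mathcomp Require Import complex.
From mathcomp Require Import classical_sets reals Rstruct.
Set Implicit Arguments. Unset Strict Implicit. Unset Printing Implicit Defensive.
Import Order.TTheory GRing.Theory Num.Theory.
Local Open Scope ring_scope.
Local Open Scope classical_set_scope.

Notation Rr := Rdefinitions.R.
Notation Cc := (Rdefinitions.R)[i].

Definition cabs (z : Cc) : Rr := ComplexField.Normc.normc z.

Definition ctrmx m n (A : 'M[Cc]_(m, n)) : 'M[Cc]_(n, m) := (map_mx Num.conj A)^T.

(* X is the Moore–Penrose inverse of A (the four Penrose equations);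
   it exists and is unique, so quantifying over it denotes A^dagger. *)
Definition is_pinv m n (A : 'M[Cc]_(m, n)) (X : 'M[Cc]_(n, m)) : Prop :=
  [/\ A *m X *m A = A, X *m A *m X = X,
      ctrmx (A *m X) = A *m X & ctrmx (X *m A) = X *m A].

Definition frob m n (A : 'M[Cc]_(m, n)) : Rr :=
  Num.sqrt (\sum_(i < m) \sum_(j < n) cabs (A i j) ^+ 2).

Definition vnorm n (x : 'cV[Cc]_n) : Rr :=
  Num.sqrt (\sum_(i < n) cabs (x i 0) ^+ 2).

Definition specnorm m n (A : 'M[Cc]_(m, n)) : Rr :=
  sup [set vnorm (A *m x) | x in [set x : 'cV[Cc]_n | vnorm x <= 1]].

(* Main.v *)
Require Import Defs.
From HB Require Import structures.
From mathcomp Require Import all_boot all_order all_algebra.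
From mathcomp Require Import complex.
From mathcomp Require Import classical_sets reals Rstruct.
From mathcomp Require Import ring lra.
Import Order.TTheory GRing.Theory Num.Theory.
Local Open Scope ring_scope.
Set Implicit Arguments. Unset Strict Implicit.
Section Ct.
Variables m n p : nat.

Lemma ctrmxM (X : 'M[Cc]_(m, n)) (Y : 'M[Cc]_(n, p)) :
  ctrmx (X *m Y) = ctrmx Y *m ctrmx X.
Proof. by rewrite /ctrmx map_mxM trmx_mul. Qed.

Lemma ctrmxD (X Y : 'M[Cc]_(m, n)) : ctrmx (X + Y) = ctrmx X + ctrmx Y.
Proof. by rewrite /ctrmx map_mxD linearD. Qed.

Lemma ctrmxN (X : 'M[Cc]_(m, n)) : ctrmx (- X) = - ctrmx X.
Proof. by rewrite /ctrmx map_mxN linearN. Qed.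

Lemma ctrmxB (X Y : 'M[Cc]_(m, n)) : ctrmx (X - Y) = ctrmx X - ctrmx Y.
Proof. by rewrite ctrmxD ctrmxN. Qed.

Lemma ctrmxK (X : 'M[Cc]_(m, n)) : ctrmx (ctrmx X) = X.
Proof. by apply/matrixP => i j; rewrite /ctrmx !mxE conjCK. Qed.

Lemma ctrmxZr (a : Rr) (X : 'M[Cc]_(m, n)) : ctrmx ((a%:C)%C *: X) = (a%:C)%C *: ctrmx X.
Proof. by apply/matrixP => i j; rewrite /ctrmx !mxE rmorphM /=; congr (_ * _); exact: conjc_real. Qed.

End Ct.

Lemma ctrmx1 n : ctrmx (1%:M : 'M[Cc]_n) = 1%:M.
Proof. by rewrite /ctrmx map_mx1 trmx1. Qed.

Lemma frob2C m n (X : 'M[Cc]_(m, n)) :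
  ((frob X ^+ 2)%:C)%C = \tr (X *m ctrmx X).
Proof.
rewrite /frob sqr_sqrtr; last by apply: sumr_ge0 => i _; apply: sumr_ge0 => j _; apply: sqr_ge0.
rewrite rmorph_sum /mxtrace; apply: eq_bigr => i _.
rewrite rmorph_sum mxE; apply: eq_bigr => j _.
rewrite rmorphXn /= /ctrmx !mxE.
have -> : ((cabs (X i j))%:C)%C = `|X i j| by [].
by rewrite normCK.
Qed.
Lemma frob_ge0 m n (X : 'M[Cc]_(m, n)) : 0 <= frob X.
Proof. exact: sqrtr_ge0. Qed.

Lemma frobC m n (X : 'M[Cc]_(m, n)) : frob (ctrmx X) ^+ 2 = frob X ^+ 2.
Proof. apply: (@complexI Rr); by rewrite !frob2C ctrmxK mxtrace_mulC. Qed.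

Lemma frobN m n (X : 'M[Cc]_(m, n)) : frob (- X) = frob X.
Proof.
rewrite /frob; congr (Num.sqrt _); apply: eq_bigr => i _; apply: eq_bigr => j _.
by rewrite mxE /cabs normcN.
Qed.

Lemma frob0 m n : frob (0 : 'M[Cc]_(m, n)) = 0.
Proof.
rewrite /frob big1 ?sqrtr0 // => i _; rewrite big1 // => j _.
by rewrite mxE /cabs ComplexField.Normc.normc0 expr0n.
Qed.

Lemma pythL m n (P : 'M[Cc]_m) (X : 'M[Cc]_(m, n)) :
  ctrmx P = P -> P *m P = P ->
  frob X ^+ 2 = frob (P *m X) ^+ 2 + frob ((1%:M - P) *m X) ^+ 2.
Proof.
move=> hP iP.
have h1 : (1%:M - P) *m P = 0 by rewrite mulmxBl mul1mx iP subrr.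
have h2 : P *m (1%:M - P) = 0 by rewrite mulmxBr mulmx1 iP subrr.
have hc : ctrmx (1%:M - P) = 1%:M - P by rewrite ctrmxB ctrmx1 hP.
apply: (@complexI Rr); rewrite rmorphD /= !frob2C.
have {1 2}-> : X = P *m X + (1%:M - P) *m X by rewrite mulmxBl mul1mx addrC subrK.
rewrite ctrmxD !ctrmxM hP hc mulmxDl !(mulmxDr _ (ctrmx X *m P) (ctrmx X *m (1%:M - P))) !mxtraceD.
have -> : \tr (P *m X *m (ctrmx X *m (1%:M - P))) = 0.
  by rewrite mxtrace_mulC -mulmxA (mulmxA (1%:M - P)) h1 mul0mx mulmx0 mxtrace0.
have -> : \tr ((1%:M - P) *m X *m (ctrmx X *m P)) = 0.
  by rewrite mxtrace_mulC -mulmxA (mulmxA P) h2 mul0mx mulmx0 mxtrace0.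
by rewrite addr0 add0r !mulmxA.
Qed.

Lemma pythR m n (R : 'M[Cc]_n) (X : 'M[Cc]_(m, n)) :
  ctrmx R = R -> R *m R = R ->
  frob X ^+ 2 = frob (X *m R) ^+ 2 + frob (X *m (1%:M - R)) ^+ 2.
Proof.
move=> hR iR.
rewrite -frobC (@pythL _ _ R (ctrmx X) hR iR) -(@frobC _ _ (X *m R)) -(@frobC _ _ (X *m (1%:M - R))).
by rewrite !ctrmxM hR ctrmxB ctrmx1 hR.
Qed.
Lemma cabs_ge0 (z : Cc) : 0 <= cabs z.
Proof. by rewrite -(@ler0c Rr); exact: (normr_ge0 z). Qed.

Lemma cabsM (a b : Cc) : cabs (a * b) = cabs a * cabs b.
Proof. exact: ComplexField.Normc.normcM. Qed.

Lemma cabs_sum I (r : seq I) (F : I -> Cc) :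
  cabs (\sum_(i <- r) F i) <= \sum_(i <- r) cabs (F i).
Proof.
rewrite -(@lecR Rr) rmorph_sum /=.
exact: (ler_norm_sum r F xpredT).
Qed.

Lemma cabsR (r : Rr) : 0 <= r -> cabs ((r%:C)%C) = r.
Proof.
move=> hr; have -> : cabs ((r%:C)%C) = Num.sqrt (r^+2 + 0^+2) by [].
by rewrite expr0n addr0 sqrtr_sqr ger0_norm.
Qed.

Lemma vnorm_ge0 n (x : 'cV[Cc]_n) : 0 <= vnorm x.
Proof. exact: sqrtr_ge0. Qed.

Lemma vnorm2 n (x : 'cV[Cc]_n) : vnorm x ^+ 2 = \sum_i cabs (x i 0) ^+ 2.
Proof. by rewrite /vnorm sqr_sqrtr // sumr_ge0 // => i _; apply: sqr_ge0. Qed.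

Lemma vnormZ n (c : Cc) (x : 'cV[Cc]_n) : vnorm (c *: x) = cabs c * vnorm x.
Proof.
rewrite /vnorm.
have -> : \sum_i cabs ((c *: x) i 0) ^+ 2 = cabs c ^+ 2 * \sum_i cabs (x i 0) ^+ 2.
  by rewrite mulr_sumr; apply: eq_bigr => i _; rewrite mxE cabsM exprMn.
by rewrite sqrtrM ?sqr_ge0 // sqrtr_sqr ger0_norm // cabs_ge0.
Qed.

Lemma vnorm_entry n (x : 'cV[Cc]_n) i : cabs (x i 0) <= vnorm x.
Proof.
have h : cabs (x i 0) ^+ 2 <= vnorm x ^+ 2.
  rewrite vnorm2 (bigD1 i) //= lerDl; apply: sumr_ge0 => j _; exact: sqr_ge0.
have := cabs_ge0 (x i 0); have := vnorm_ge0 x; nra.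
Qed.

Lemma vnorm_eq0 n (x : 'cV[Cc]_n) : vnorm x = 0 -> x = 0.
Proof.
move=> h; have h2 : \sum_i cabs (x i 0) ^+ 2 = 0 by rewrite -vnorm2 h expr0n.
apply/matrixP => i j; rewrite (ord1 j) mxE.
have := psumr_eq0P (fun i _ => sqr_ge0 (cabs (x i 0))) h2 (i := i) isT.
move/eqP; rewrite sqrf_eq0 => /eqP.
exact: ComplexField.Normc.eq0_normc.
Qed.

Lemma vnorm0 n : vnorm (0 : 'cV[Cc]_n) = 0.
Proof.
rewrite /vnorm big1 ?sqrtr0 // => i _.
by rewrite mxE /cabs ComplexField.Normc.normc0 expr0n.
Qed.

Lemma specnorm_sup m n (M : 'M[Cc]_(m, n)) :
  has_sup [set vnorm (M *m x) | x in [set x : 'cV[Cc]_n | vnorm x <= 1]].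
Proof.
split.
  exists (vnorm (M *m 0)); exists 0 => //=; by rewrite vnorm0.
exists (Num.sqrt (\sum_i (\sum_j cabs (M i j)) ^+ 2)).
move=> _ [x /= hx <-].
rewrite /vnorm ler_sqrt; last by apply: sumr_ge0 => i _; exact: sqr_ge0.
apply: ler_sum => i _.
have h1 : cabs ((M *m x) i 0) <= \sum_j cabs (M i j).
  rewrite mxE; apply: (le_trans (cabs_sum _ _)).
  apply: ler_sum => j _; rewrite cabsM.
  have := vnorm_entry x j; have := cabs_ge0 (x j 0); have := cabs_ge0 (M i j); nra.
have := cabs_ge0 ((M *m x) i 0); nra.
Qed.

Lemma specnormP m n (M : 'M[Cc]_(m, n)) (x : 'cV[Cc]_n) :
  vnorm (M *m x) <= specnorm M * vnorm x.
Proof.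
have [h0|hpos] := eqVneq (vnorm x) 0.
  by rewrite (vnorm_eq0 h0) mulmx0 !vnorm0 mulr0.
have cpos : 0 < vnorm x by rewrite lt_def hpos vnorm_ge0.
set c := vnorm x.
have hc : 0 <= c^-1 by rewrite invr_ge0 ltW.
have hx' : vnorm (((c^-1)%:C)%C *: x) = 1 by rewrite vnormZ cabsR // mulVf.
have hle : vnorm (M *m (((c^-1)%:C)%C *: x)) <= specnorm M.
  apply: sup_upper_bound; first exact: specnorm_sup.
  by exists (((c^-1)%:C)%C *: x) => //=; rewrite hx'.
move: hle; rewrite -scalemxAr vnormZ cabsR // => hle.
have e : c^-1 * c = 1 by rewrite mulVf // gt_eqF.
have h3 := ler_wpM2r (ltW cpos) hle.
by rewrite mulrAC e mul1r in h3.
Qed.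
Lemma frob_col m n (X : 'M[Cc]_(m, n)) : frob X ^+ 2 = \sum_j vnorm (col j X) ^+ 2.
Proof.
rewrite /frob sqr_sqrtr; last by apply: sumr_ge0 => i _; apply: sumr_ge0 => j _; apply: sqr_ge0.
rewrite exchange_big /=; apply: eq_bigr => j _; rewrite vnorm2.
by apply: eq_bigr => i _; rewrite mxE.
Qed.

Lemma specL m n k (M : 'M[Cc]_(m, n)) (Y : 'M[Cc]_(n, k)) :
  frob (M *m Y) ^+ 2 <= specnorm M ^+ 2 * frob Y ^+ 2.
Proof.
rewrite !frob_col mulr_sumr; apply: ler_sum => j _; rewrite !colE -mulmxA -colE.
have := specnormP M (col j Y); have := vnorm_ge0 (M *m col j Y); nra.
Qed.

Lemma tr_expand m n (U V : 'M[Cc]_(m, n)) :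
  \tr ((U - V) *m ctrmx (U - V)) =
  \tr (U *m ctrmx U) - \tr (U *m ctrmx V) - \tr (V *m ctrmx U) + \tr (V *m ctrmx V).
Proof.
rewrite ctrmxB mulmxBl !mulmxBr !raddfB /=.
by rewrite opprK !addrA.
Qed.
Lemma real_rhs (t y a w : Rr) :
  (((t ^+ 2 * y - 2 * t * a + w)%:C)%C : Cc) =
  ((t%:C)%C) ^+ 2 * (y%:C)%C - 2 * (t%:C)%C * (a%:C)%C + (w%:C)%C.
Proof. by rewrite rmorphD rmorphB !rmorphM expr2 rmorph_nat. Qed.

Lemma specLC m n k (M : 'M[Cc]_(m, n)) (Y : 'M[Cc]_(m, k)) :
  frob (ctrmx M *m Y) ^+ 2 <= specnorm M ^+ 2 * frob Y ^+ 2.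
Proof.
have iden : forall t : Rr,
    frob (((t%:C)%C *: Y) - M *m (ctrmx M *m Y)) ^+ 2 =
    t ^+ 2 * frob Y ^+ 2 - 2 * t * frob (ctrmx M *m Y) ^+ 2 + frob (M *m (ctrmx M *m Y)) ^+ 2.
  move=> t; apply: (@complexI Rr).
  rewrite real_rhs !frob2C tr_expand.
  rewrite ctrmxZr -!scalemxAl -!scalemxAr !mxtraceZ.
  have e1 : \tr (Y *m ctrmx (M *m (ctrmx M *m Y))) = \tr (ctrmx M *m Y *m ctrmx (ctrmx M *m Y)).
    rewrite !ctrmxM ctrmxK !mulmxA [RHS]mxtrace_mulC !mulmxA.
    by rewrite -[X in _ = \tr X]mulmxA [RHS]mxtrace_mulC !mulmxA.
  have e2 : \tr (M *m (ctrmx M *m Y) *m ctrmx Y) = \tr (ctrmx M *m Y *m ctrmx (ctrmx M *m Y)).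
    by rewrite !ctrmxM ctrmxK !mulmxA [RHS]mxtrace_mulC !mulmxA.
  rewrite e1 e2; ring.
have nn : forall t : Rr, 0 <= t ^+ 2 * frob Y ^+ 2 - 2 * t * frob (ctrmx M *m Y) ^+ 2
    + frob (M *m (ctrmx M *m Y)) ^+ 2.
  by move=> t; rewrite -iden; exact: sqr_ge0.
have hw := specL M (ctrmx M *m Y).
have y0 : 0 <= frob Y ^+ 2 := sqr_ge0 _.
have a0 : 0 <= frob (ctrmx M *m Y) ^+ 2 := sqr_ge0 _.
have w0 : 0 <= frob (M *m (ctrmx M *m Y)) ^+ 2 := sqr_ge0 _.
have s0 : 0 <= specnorm M ^+ 2 := sqr_ge0 _.
clear iden; move: nn hw y0 a0 w0 s0.
generalize (frob Y ^+ 2) => y.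
generalize (frob (ctrmx M *m Y) ^+ 2) => a.
generalize (frob (M *m (ctrmx M *m Y)) ^+ 2) => w.
generalize (specnorm M ^+ 2) => s.
move=> nn hw y0 a0 w0 s0.
have [s_0|sn] := eqVneq s 0; last first.
  have sp : 0 < s by rewrite lt_def sn s0.
  have h := nn s; nra.
rewrite s_0 mul0r; rewrite s_0 mul0r in hw.
have yp : 0 < y + 1 by lra.
set q := (y + 1)^-1.
have kp : 0 < q by rewrite invr_gt0.
have ek : q * (y + 1) = 1 by rewrite mulVf // gt_eqF.
have h := nn (a * q).
have h2 : a ^+ 2 * q * (q * y) = a ^+ 2 * q * (1 - q).
  by rewrite -ek; ring.
rewrite leNgt; apply/negP => ap.
have p : 0 < a ^+ 2 * q by rewrite mulr_gt0 // exprn_gt0.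
have p2 : 0 <= a ^+ 2 * q ^+ 2 by rewrite mulr_ge0 // sqr_ge0.
have e3 : (a * q) ^+ 2 * y - 2 * (a * q) * a = a ^+ 2 * q * (q * y) - 2 * (a ^+ 2 * q) by ring.
have e4 : a ^+ 2 * q * (1 - q) = a ^+ 2 * q - a ^+ 2 * q ^+ 2 by ring.
lra.
Qed.
Section Main.
Variables m n : nat.
Variables (A B : 'M[Cc]_(m, n)) (Ad Bd : 'M[Cc]_(n, m)).
Hypothesis hA : is_pinv A Ad.
Hypothesis hB : is_pinv B Bd.

Lemma final_real (x0 x1 x2 x3 x4 x5 x6 x6z x7 x8 x9 x10 x11 x12 Sa Sb : Rr) :
  0 <= Sa ^+ 2 -> 0 <= Sb ^+ 2 ->
  x0 = x1 + x2 -> x1 = x3 + x4 -> x2 = x9 ->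
  x4 <= Sb ^+ 2 * x5 -> x5 <= Sb ^+ 2 * x6z -> x6z = x6 ->
  x7 = x8 + x6 -> x9 <= Sa ^+ 2 * x10 -> x10 <= Sa ^+ 2 * x11 ->
  x7 = x12 + x11 ->
  x0 <= Sa ^+ 4 * (x7 - x12) + Sb ^+ 4 * (x7 - x8) + x3.
Proof.
move=> sa sb e0 e1 e2 b21 b22 fZ pA b31 b32 pB.
have m2 := ler_wpM2l sb b22.
have m3 := ler_wpM2l sa b32.
have s4a : Sa ^+ 4 = Sa ^+ 2 * Sa ^+ 2 by rewrite -exprD.
have s4b : Sb ^+ 4 = Sb ^+ 2 * Sb ^+ 2 by rewrite -exprD.
rewrite s4a s4b; rewrite fZ in m2.
have -> : x7 - x12 = x11 by rewrite pB addrC addKr.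
have -> : x7 - x8 = x6 by rewrite pA addrC addKr.
nra.
Qed.

Lemma rA1 k (X : 'M[Cc]_(k, m)) : X *m A *m Ad *m A = X *m A.
Proof. by case: hA => h1 _ _ _; rewrite -!mulmxA (mulmxA A Ad A) h1. Qed.
Lemma rA2 k (X : 'M[Cc]_(k, n)) : X *m Ad *m A *m Ad = X *m Ad.
Proof. by case: hA => _ h2 _ _; rewrite -!mulmxA (mulmxA Ad A Ad) h2. Qed.
Lemma rB1 k (X : 'M[Cc]_(k, m)) : X *m B *m Bd *m B = X *m B.
Proof. by case: hB => h1 _ _ _; rewrite -!mulmxA (mulmxA B Bd B) h1. Qed.
Lemma rB2 k (X : 'M[Cc]_(k, n)) : X *m Bd *m B *m Bd = X *m Bd.
Proof. by case: hB => _ h2 _ _; rewrite -!mulmxA (mulmxA Bd B Bd) h2. Qed.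

Lemma cA k (X : 'M[Cc]_(k, n)) : X *m ctrmx A *m A *m Ad = X *m ctrmx A.
Proof.
case: hA => h1 _ h3 _.
by rewrite -!mulmxA -h3 -ctrmxM h1.
Qed.
Lemma cB k (X : 'M[Cc]_(k, n)) : X *m Bd *m B *m ctrmx B = X *m ctrmx B.
Proof.
case: hB => h1 _ _ h4.
by rewrite -!mulmxA (mulmxA Bd B (ctrmx B)) -h4 -ctrmxM mulmxA h1.
Qed.
Lemma dB k (X : 'M[Cc]_(k, n)) : X *m Bd *m ctrmx Bd *m ctrmx B = X *m Bd.
Proof.
case: hB => _ h2 h3 _.
by rewrite -!mulmxA -ctrmxM h3 (mulmxA Bd B Bd) h2.
Qed.
Lemma dA k (X : 'M[Cc]_(k, n)) : X *m ctrmx A *m ctrmx Ad *m Ad = X *m Ad.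
Proof.
case: hA => _ h2 _ h4.
by rewrite -!mulmxA (mulmxA (ctrmx A) (ctrmx Ad) Ad) -ctrmxM h4 h2.
Qed.


Lemma zl (V : zmodType) (a b c : V) : a - b - (a - c) = c - b.
Proof. by rewrite opprB addrC addrA subrK. Qed.

Lemma zl3 (V : zmodType) (a b c : V) : a - b - (c - b) = a - c.
Proof. by rewrite opprB addrA subrK. Qed.

Lemma i1 : Bd *m B *m (Bd - Ad) *m (A *m Ad) = - (Bd *m (B - A) *m Ad).
Proof.
case: hA => hA1 hA2 hA3 hA4; case: hB => hB1 hB2 hB3 hB4.
rewrite mulmxBr !mulmxBl mulmxBr !mulmxA hB2 rA2.
by rewrite mulmxBl opprB.
Qed.

Lemma i2 : Bd *m B *m (Bd - Ad) *m (1%:M - A *m Ad) =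
   Bd *m (ctrmx Bd *m (ctrmx (B - A) *m (1%:M - A *m Ad))).
Proof.
case: hA => hA1 hA2 hA3 hA4; case: hB => hB1 hB2 hB3 hB4.
have dB0 : Bd *m ctrmx Bd *m ctrmx B = Bd.
  by have := dB (1%:M : 'M_n); rewrite !mul1mx.
rewrite ctrmxB !mulmxBr !mulmxBl !mulmxBr !mulmx1 !mulmxA hB2 rA2 dB0 cA.
by rewrite !opprB !addrA !subrK.
Qed.

Lemma i3 : (1%:M - Bd *m B) *m (Bd - Ad) *m (A *m Ad) =
   ctrmx (ctrmx Ad *m (Ad *m ((B - A) *m (1%:M - Bd *m B)))).
Proof.
case: hA => hA1 hA2 hA3 hA4; case: hB => hB1 hB2 hB3 hB4.
have hc : ctrmx (1%:M - Bd *m B) = 1%:M - Bd *m B by rewrite ctrmxB ctrmx1 hB4.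
have dA0 : ctrmx A *m ctrmx Ad *m Ad = Ad.
  by have := dA (1%:M : 'M_n); rewrite !mul1mx.
have cB0 : Bd *m B *m ctrmx B = ctrmx B.
  by have := cB (1%:M : 'M_n); rewrite !mul1mx.
rewrite !ctrmxM ctrmxK hc ctrmxB.
rewrite !mulmxBl !mul1mx !mulmxBr !mulmxBl !mulmxA hA2 hB2 rA2 dA0 dA cB0.
by rewrite !zl.
Qed.

Lemma i4 : (1%:M - Bd *m B) *m (Bd - Ad) *m (1%:M - A *m Ad) = 0.
Proof.
case: hA => hA1 hA2 hA3 hA4; case: hB => hB1 hB2 hB3 hB4.
rewrite !mulmxBl !mul1mx !mulmxBr !mulmxBl !mulmx1 !mulmxA hA2 hB2 rA2.
by rewrite !zl3 subrr.
Qed.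

Lemma main_bound :
  frob (Bd - Ad) ^+ 2 <=
    specnorm Ad ^+ 4 * (frob (B - A) ^+ 2 - frob ((B - A) *m Bd *m B) ^+ 2)
    + specnorm Bd ^+ 4 * (frob (B - A) ^+ 2 - frob (A *m Ad *m (B - A)) ^+ 2)
    + frob (Bd *m (B - A) *m Ad) ^+ 2.
Proof.
have [hA1 hA2 hA3 hA4] := hA; have [hB1 hB2 hB3 hB4] := hB.
have iPA : A *m Ad *m (A *m Ad) = A *m Ad by rewrite mulmxA hA1.
have iQB : Bd *m B *m (Bd *m B) = Bd *m B by rewrite mulmxA hB2.
have e0 := @pythL _ _ (Bd *m B) (Bd - Ad) hB4 iQB.
have e1 := @pythR _ _ (A *m Ad) (Bd *m B *m (Bd - Ad)) hA3 iPA.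
have e2 := @pythR _ _ (A *m Ad) ((1%:M - Bd *m B) *m (Bd - Ad)) hA3 iPA.
rewrite i1 i2 in e1; rewrite i3 i4 frob0 expr0n addr0 frobC in e2; rewrite frobN in e1.
have hcA : ctrmx (1%:M - A *m Ad) = 1%:M - A *m Ad by rewrite ctrmxB ctrmx1 hA3.
have b21 := specL Bd (ctrmx Bd *m (ctrmx (B - A) *m (1%:M - A *m Ad))).
have b22 := specLC Bd (ctrmx (B - A) *m (1%:M - A *m Ad)).
have fZ : frob (ctrmx (B - A) *m (1%:M - A *m Ad)) ^+ 2 = frob ((1%:M - A *m Ad) *m (B - A)) ^+ 2.
  by rewrite -frobC ctrmxM ctrmxK hcA.
have pA := @pythL _ _ (A *m Ad) (B - A) hA3 iPA.
have b31 := specLC Ad (Ad *m ((B - A) *m (1%:M - Bd *m B))).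
have b32 := specL Ad ((B - A) *m (1%:M - Bd *m B)).
have pB := @pythR _ _ (Bd *m B) (B - A) hB4 iQB.
rewrite -(mulmxA (B - A) Bd B).
have sa0 : 0 <= specnorm Ad ^+ 2 := sqr_ge0 _.
have sb0 : 0 <= specnorm Bd ^+ 2 := sqr_ge0 _.
exact: (final_real sa0 sb0 e0 e1 e2 b21 b22 fZ pA b31 b32 pB).
Qed.
End Main.

Unset Implicit Arguments.
Unset Strict Implicit.

Theorem corollary3p3 (m n r s : nat) (A B : 'M[Cc]_(m, n)) (Ad Bd : 'M[Cc]_(n, m)) :
  \rank A = r -> \rank B = s ->
  is_pinv A Ad -> is_pinv B Bd ->
  let E := B - A in
  let beta1 : Rr :=
    specnorm Ad ^+ 4 * (frob E ^+ 2 - frob (E *m Bd *m B) ^+ 2)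
    + specnorm Bd ^+ 4 * (frob E ^+ 2 - frob (A *m Ad *m E) ^+ 2) in
  let beta2 : Rr :=
    specnorm Ad ^+ 4 * (frob E ^+ 2 - frob (B *m Bd *m E) ^+ 2)
    + specnorm Bd ^+ 4 * (frob E ^+ 2 - frob (E *m Ad *m A) ^+ 2) in
  frob (Bd - Ad) ^+ 2 <=
    Num.min (beta1 + frob (Bd *m E *m Ad) ^+ 2) (beta2 + frob (Ad *m E *m Bd) ^+ 2).
Proof.
move=> _ _ hA hB /=.
rewrite le_min; apply/andP; split.
  exact: (main_bound hA hB).
have h := main_bound hB hA.
rewrite -opprB frobN -(opprB B A) !mulmxN !mulNmx !frobN in h.

move: h.
set x1 := specnorm Ad ^+ 4 * _.
set x2 := specnorm Bd ^+ 4 * _.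
move=> h.
by rewrite (addrC x1 x2).
Qed.
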